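(* Let $E$ be a real Banach space and let $\mu$ be a regular Borel probability measure on the compact space $(B_{E^{**}},w^* )$. Define $f_\mu:E^*\to\mathbb R_+$ by $f_\mu(x^* )=\int_{B_{E^{**}}}|x^*(\cdot)|\,d\mu$, where $x^*(x^{**})$ means $x^{**}(x^* )$. Then $f_\mu\in H_0[E]_+$ and $\|f_\mu\|_{FBL[E]}\le 1$.
   Context: For a real Banach space $E$ with dual $E^*$ and closed unit ball $B_E$, let $H[E]$ be the vector space of all positively homogeneous functions $f:E^*\to\mathbb R$ ($f(\lambda x^* )=\lambda f(x^* )$ for $\lambda>0$). For $f\in H[E]$ put $\|f\|_{FBL[E]}:=\sup\{\sum_{k=1}^n|f(x_k^* )| : n\in\mathbb N,\ x_1^*,\dots,x_n^*\in E^*,\ \sup_{x\in B_E}\sum_{k=1}^n|x_k^*(x)|\le 1\}$. $H_0[E]:=\{f\in H[E]:\|f\|_{FBL[E]}<\infty\}$, a Banach lattice with this norm and pointwise order; $H_0[E]_+$ is its positive cone. *)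

(* Defs.v *)
From HB Require Import structures.
From mathcomp Require Import all_boot all_order all_algebra.
From mathcomp Require Import all_classical all_reals all_analysis.
Set Implicit Arguments. Unset Strict Implicit. Unset Printing Implicit Defensive.
Import Order.TTheory GRing.Theory Num.Theory.
Import numFieldNormedType.Exports.
Local Open Scope classical_set_scope.
Local Open Scope ring_scope.

Record dual (R : realType) (E : normedModType R) := Dual {
  dual_fun :> E -> R ;
  dual_linear : forall (a : R) (u v : E), dual_fun (a *: u + v) = a * dual_fun u + dual_fun v ;
  dual_cont : continuous dual_fun }.

Section Defs.
Variables (R : realType) (E : normedModType R).

Definition unit_ballE : set E := [set x | `|x| <= 1].

Definition dual_norm (xs : dual E) : \bar R :=
  ereal_sup [set (`|xs x|)%:E | x in unit_ballE].

Definition dual_comb (a : R) (x y z : dual E) : Prop :=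
  forall e : E, z e = a * x e + y e.

(* Elements of E^{**} restricted to the closed unit ball: linear functionals
   phi on E^* with ||phi|| <= 1, i.e. |phi(x^* )| <= ||x^* || for all x^*. *)
Definition bidual_ball : set {ptws dual E -> R} :=
  [set phi | (forall (a : R) (x y z : dual E), dual_comb a x y z ->
                 phi z = a * phi x + phi y)
           /\ (forall x : dual E, ((`|phi x|)%:E <= dual_norm x)%E)].

Lemma bidual_ball0 : bidual_ball (fun _ => 0).
Proof.
split.
  by move=> a x y z _; rewrite mulr0 addr0.
move=> x; rewrite normr0; apply: ereal_sup_ubound; exists 0; rewrite /unit_ballE /=.
  by rewrite normr0 ler01.
have H := dual_linear x 1 0 0.
rewrite scaler0 addr0 mul1r -{1}[x 0]addr0 in H.
by move/addrI: H => <-; rewrite normr0.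
Qed.

(* (B_{E^{**}}, w^* ) : the unit ball of the bidual, as a subtype carrying the
   initial topology of the inclusion into {ptws E^* -> R}, i.e. the weak^*
   topology sigma(E^{**}, E^* ) restricted to the ball. *)
Definition bidual_ballT := set_type bidual_ball.

HB.instance Definition _ := Topological.on bidual_ballT.
HB.instance Definition _ := isPointed.Build bidual_ballT
  (exist _ (fun _ => 0) (mem_set bidual_ball0)).

Definition bidual_ballM := g_sigma_algebraType (@open bidual_ballT).
HB.instance Definition _ := Measurable.on bidual_ballM.

Definition bb_eval (phi : bidual_ballT) (xs : dual E) : R := (val phi) xs.

Definition f_mu (mu : set bidual_ballM -> \bar R) (xs : dual E) : R :=
  fine (\int[mu]_(phi in setT) (`|bb_eval phi xs|)%:E)%E.

Definition pos_homogeneous (f : dual E -> R) : Prop :=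
  forall (l : R) (x y : dual E), 0 < l -> (forall e : E, y e = l * x e) ->
    f y = l * f x.

Definition fbl_norm (f : dual E -> R) : \bar R :=
  ereal_sup [set r : \bar R | exists (n : nat) (xs : 'I_n -> dual E),
       (forall x : E, unit_ballE x -> \sum_(k < n) `|xs k x| <= 1) /\
       r = (\sum_(k < n) `|f (xs k)|)%:E].

Definition H0 (f : dual E -> R) : Prop :=
  pos_homogeneous f /\ (fbl_norm f < +oo)%E.

Definition H0_pos (f : dual E -> R) : Prop :=
  H0 f /\ forall xs : dual E, 0 <= f xs.

End Defs.

Definition regular_measure (T : ptopologicalType)
    (R : realType) (mu : set (g_sigma_algebraType (@open T)) -> \bar R) : Prop :=
  forall A : set T, <<s @open T >> A ->
    mu A = ereal_sup [set mu K | K in [set K : set T | compact K /\ K `<=` A]] /\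
    mu A = ereal_inf [set mu U | U in [set U : set T | open U /\ A `<=` U]].

(* Main.v *)
From HB Require Import structures.
From mathcomp Require Import all_boot all_order all_algebra.
From mathcomp Require Import all_classical all_reals all_analysis.
From mathcomp Require Import measurable_realfun ring lra.
Require Import Defs.
Import Order.TTheory GRing.Theory Num.Theory.
Import numFieldNormedType.Exports.
Set Implicit Arguments. Unset Strict Implicit. Unset Printing Implicit Defensive.
Local Open Scope classical_set_scope.
Local Open Scope ring_scope.

HB.instance Definition _ (R : realType) (E : normedModType R) := gen_eqMixin (dual E).

Section helpers.
Context (R : realType) (E : normedModType R).

Lemma dual0 (xs : dual E) : xs 0 = 0.
Proof.
have H := dual_linear xs 1 0 0.
rewrite scaler0 addr0 mul1r -{1}[xs 0]addr0 in H.
by move/addrI: H => <-.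
Qed.

Definition dzero : dual E.
Proof.
refine (@Dual R E (fun _ => 0) _ _).
  by move=> a u v; rewrite mulr0 addr0.
exact: cst_continuous.
Defined.

Definition dcomb (a : R) (x y : dual E) : dual E.
Proof.
refine (@Dual R E (fun e => a * x e + y e) _ _).
  by move=> b u v; rewrite !dual_linear; ring.
move=> e.
have hx : {for e, continuous (dual_fun x)} by exact: dual_cont.
have hy : {for e, continuous (dual_fun y)} by exact: dual_cont.
have ha : {for e, continuous (fun _ : E => a)} by exact: cst_continuous.
exact: (continuousD (continuousM ha hx) hy).
Defined.

Lemma dual_bnd (xs : dual E) : exists M : R, forall x : E, `|x| <= 1 -> `|xs x| <= M.
Proof.
have h : {for 0, continuous (dual_fun xs)} by exact: dual_cont.
have := @cvgr_dist_lt _ _ _ _ _ _ _ h 1 ltr01.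
rewrite dual0 => hn; have [d d0 Hd] := (nbhs_ballP _ _).1 (hn (nbhs_filter _)).
exists (2 / d) => x hx.
have hb : ball (0 : E) d ((d / 2) *: x).
  rewrite -ball_normE /= sub0r normrN normrZ gtr0_norm ?divr_gt0 //.
  apply: (le_lt_trans (ler_wpM2l _ hx)); first by rewrite ltW ?divr_gt0.
  by rewrite mulr1 ltr_pdivrMr // ltr_pMr // ltr1n.
have := Hd _ hb; rewrite /= sub0r normrN.
have := dual_linear xs (d / 2) x 0; rewrite addr0 dual0 addr0 => ->.
rewrite normrM gtr0_norm ?divr_gt0 // => H.
have -> : `|xs x| = (2 / d) * (d / 2 * `|xs x|).
  by field; rewrite gt_eqF.
by rewrite -[X in _ <= X]mulr1 ler_wpM2l ?ltW ?divr_gt0.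
Qed.


Lemma phi_prop (phi : bidual_ballT E) :
  (forall (a : R) (x y z : dual E), dual_comb a x y z ->
     bb_eval phi z = a * bb_eval phi x + bb_eval phi y)
  /\ (forall x : dual E, ((`|bb_eval phi x|)%:E <= dual_norm x)%E).
Proof. exact: (set_valP phi). Qed.

Lemma phi_zero (phi : bidual_ballT E) : bb_eval phi dzero = 0.
Proof.
have [lin _] := phi_prop phi.
have h : dual_comb 1 dzero dzero dzero by move=> e; rewrite /dzero /= mulr0 addr0.
have := lin _ _ _ _ h; rewrite mul1r.
by move/(congr1 (fun t => t - bb_eval phi dzero)); rewrite subrr addrK => <-.
Qed.

Lemma phi_bnd (xs : dual E) : exists M : R, forall phi : bidual_ballT E,
  `|bb_eval phi xs| <= M.
Proof.
have [M HM] := dual_bnd xs.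
exists M => phi; have [_ nb] := phi_prop phi.
have hb : (dual_norm xs <= M%:E)%E.
  apply: ge_ereal_sup => _ [x hx <-]; rewrite lee_fin; exact: HM.
by have := le_trans (nb xs) hb; rewrite lee_fin.
Qed.

Lemma phi_hom (phi : bidual_ballT E) (l : R) (x y : dual E) :
  (forall e : E, y e = l * x e) -> bb_eval phi y = l * bb_eval phi x.
Proof.
move=> hy; have [lin _] := phi_prop phi.
rewrite (lin (l - 1) x x y); first by ring.
by move=> e; rewrite hy; ring.
Qed.

Lemma phi_sum (phi : bidual_ballT E) (I : Type) (r : seq I) (F : I -> dual E) :
  exists Z : dual E, (forall e, Z e = \sum_(k <- r) Num.sg (bb_eval phi (F k)) * F k e)
    /\ bb_eval phi Z = \sum_(k <- r) `|bb_eval phi (F k)|.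
Proof.
have [lin _] := phi_prop phi.
elim: r => [|k r [Z [HZ HpZ]]].
  by exists dzero; split; [move=> e; rewrite big_nil | rewrite big_nil phi_zero].
exists (dcomb (Num.sg (bb_eval phi (F k))) (F k) Z); split.
  by move=> e; rewrite big_cons /= HZ.
rewrite (lin (Num.sg (bb_eval phi (F k))) (F k) Z); last by [].
by rewrite big_cons HpZ normrEsg.
Qed.

Lemma phi_sum_le1 (phi : bidual_ballT E) (n : nat) (xs : 'I_n -> dual E) :
  (forall x : E, unit_ballE x -> \sum_(k < n) `|xs k x| <= 1) ->
  \sum_(k < n) `|bb_eval phi (xs k)| <= 1.
Proof.
move=> H.
have [Z [HZ HpZ]] := @phi_sum phi _ (index_enum 'I_n) xs.
have [_ nb] := phi_prop phi.
rewrite -HpZ; apply: (le_trans (ler_norm _)).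
have hb : (dual_norm Z <= 1%:E)%E; last by have := le_trans (nb Z) hb; rewrite lee_fin.
apply: ge_ereal_sup => _ [x hx <-]; rewrite lee_fin HZ.
apply: (le_trans (ler_norm_sum _ _ _)).
apply: le_trans (H x hx); apply: ler_sum => k _.
rewrite normrM; apply: ler_piMl => //.
by rewrite normr_sg; case: (_ != 0).
Qed.

End helpers.
Lemma cont_eval (R : realType) (E : normedModType R) (xs : dual E) :
  continuous (fun phi : bidual_ballT E => bb_eval phi xs).
Proof.
move=> phi.
have h1 : {for phi, continuous (@set_val _ (@bidual_ball R E) : bidual_ballT E -> {ptws dual E -> R})}.
  exact: initial_continuous.
have h2 : continuous (fun f : {ptws dual E -> R} => f xs).
  move=> f; exact: (@proj_continuous (dual E) (fun _ => R) xs f).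
exact: (continuous_comp h1 (h2 _)).
Qed.
Lemma meas_eval (R : realType) (E : normedModType R) (xs : dual E) :
  measurable_fun (setT : set (bidual_ballM E)) (fun phi => bb_eval phi xs).
Proof.
apply: (measurability _ (RGenOpens.measurableE R)).
move=> _ [_ [a [b ->]] <-]; rewrite setTI.
apply: sub_sigma_algebra.
have /continuousP := @cont_eval R E xs; apply.
exact: interval_open.
Qed.

Lemma meas_abs (R : realType) (E : normedModType R) (xs : dual E) :
  measurable_fun (setT : set (bidual_ballM E)) (fun phi => (`|bb_eval phi xs|)%:E).
Proof.
have h : measurable_fun (setT : set (bidual_ballM E)) (fun phi => `|bb_eval phi xs|).
  exact: measurableT_comp (@normr_measurable R setT) (meas_eval xs).
exact: (proj2 (measurable_EFinP _ _) h).
Qed.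

Lemma integ_abs (R : realType) (E : normedModType R)
    (mu : probability (bidual_ballM E) R) (xs : dual E) :
  mu.-integrable setT (fun phi => (`|bb_eval phi xs|)%:E).
Proof.
have [M HM] := phi_bnd xs.
apply/integrableP; split; first exact: meas_abs.
have M0 : 0 <= M by apply: le_trans (HM point).
apply: (le_lt_trans (@integral_le_bound _ _ _ mu setT _ M%:E _ (meas_abs xs) _ _)) => //.
- by apply: aeW => phi _; rewrite /= normr_id lee_fin HM.
- apply: lte_mul_pinfty => //.
  exact: (le_lt_trans (probability_le1 mu measurableT) (ltry 1)).
Qed.

Lemma f_mu_ge0 (R : realType) (E : normedModType R)
    (mu : probability (bidual_ballM E) R) (xs : dual E) : 0 <= f_mu mu xs.
Proof. by apply: fine_ge0; apply: integral_ge0 => phi _; rewrite lee_fin. Qed.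

Lemma f_muE (R : realType) (E : normedModType R)
    (mu : probability (bidual_ballM E) R) (xs : dual E) :
  (f_mu mu xs)%:E = (\int[mu]_(phi in setT) (`|bb_eval phi xs|)%:E)%E.
Proof. by rewrite /f_mu fineK //; exact: (integrable_fin_num measurableT (integ_abs mu xs)). Qed.

Unset Implicit Arguments.
Theorem proposition2p11 (R : realType) (E : completeNormedModType R)
    (mu : probability (bidual_ballM E) R)
    (mu_regular : regular_measure (T := bidual_ballT E) mu) :
  (forall xs : dual E,
     mu.-integrable setT (fun phi => (`|bb_eval phi xs|)%:E)) /\
  H0_pos (f_mu mu) /\
  (fbl_norm (f_mu mu) <= 1)%E.
Proof.
have Hfbl : (fbl_norm (f_mu mu) <= 1)%E.
  apply: ge_ereal_sup => _ [n [xs [H ->]]].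
  rewrite -sumEFin.
  rewrite (eq_bigr (fun k => \int[mu]_(phi in setT) (`|bb_eval phi (xs k)|)%:E)%E); last first.
    by move=> k _; rewrite ger0_norm ?f_mu_ge0 // f_muE.
  have mf : forall k, measurable_fun (setT : set (bidual_ballM E))
      (fun phi => (`|bb_eval phi (xs k)|)%:E) by move=> k; exact: meas_abs.
  have f0 : forall k (phi : bidual_ballM E), setT phi -> (0 <= (`|bb_eval phi (xs k)|)%:E)%E.
    by move=> k phi _; rewrite lee_fin.
  rewrite -(@ge0_integral_sum _ _ _ mu setT measurableT _
     (fun k phi => (`|bb_eval phi (xs k)|)%:E) mf f0).
  apply: (@le_trans _ _ (\int[mu]_(phi in setT) (cst 1%E) phi)%E).
    apply: ge0_le_integral => //.
    - by move=> phi _; apply: sume_ge0 => k _; rewrite lee_fin.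
    - by apply: emeasurable_sum => k; exact: meas_abs.
    - by move=> phi _; rewrite sumEFin lee_fin; exact: phi_sum_le1.
  rewrite integral_cst // mul1e.
  have h1 := probability_le1 mu (@measurableT _ (bidual_ballM E)).
  exact: h1.
split; first by move=> xs; exact: integ_abs.
split; last exact: Hfbl.
split; last by move=> xs; exact: f_mu_ge0.
split; last by apply: (le_lt_trans Hfbl); rewrite ltry.
move=> l x y l0 hy.
have : (f_mu mu y)%:E = (l * f_mu mu x)%:E.
  rewrite EFinM !f_muE -(ge0_integralZl mu measurableT (meas_abs x)); last 2 first.
  - by move=> phi _; rewrite lee_fin.
  - by rewrite lee_fin ltW.
  apply: eq_integral => phi _.
  by rewrite (phi_hom phi hy) normrM (gtr0_norm l0) EFinM.
by move=> [].
Qed.
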